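(* For every $n\ge0$, $$\sum_{k=0}^n(-1)^kB_{n,k}=2^nE_n,$$ where $B_{n,k}=\sum_{j=0}^{n-k}(-1)^{n-k-j}\binom{n+1}{n-k-j}(2j+1)^n$ and $E_n$ are the Euler numbers defined by $\sum_{n\ge0}E_n\frac{z^n}{n!}=\frac{1}{\cosh z}$. *)

(* Defs.v *)
From HB Require Import structures.
From mathcomp Require Import all_boot all_order all_algebra.
Set Implicit Arguments. Unset Strict Implicit. Unset Printing Implicit Defensive.
Import Order.TTheory GRing.Theory Num.Theory.
Local Open Scope ring_scope.

Definition Bnk (n k : nat) : int :=
  \sum_(0 <= j < (n - k)%N.+1)
     (-1) ^+ (n - k - j)%N * ('C(n.+1, (n - k - j)%N))%:R * ((2 * j).+1 ^ n)%:R.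

Definition cosh_coef (k : nat) : rat := if odd k then 0 else (k`!%:R)^-1.

(* E : nat -> int is the sequence of Euler numbers, i.e.
   sum_n E n z^n / n! = 1 / cosh z as formal power series; equivalently
   (by definition of the reciprocal of a formal power series)
   cosh z * (sum_n E n z^n/n!) = 1, i.e. coefficientwise: *)
Definition euler_numbers (E : nat -> int) : Prop :=
  forall n : nat,
    \sum_(0 <= k < n.+1) cosh_coef k * ((E (n - k)%N)%:~R / ((n - k)%N`!)%:R)
    = (n == 0%N)%:R.

(* Main.v *)
Require Import Defs.
From HB Require Import structures.
From mathcomp Require Import all_boot all_order all_algebra.
From mathcomp Require Import zify ring lra.
Import Order.TTheory GRing.Theory Num.Theory.
Local Open Scope ring_scope.

Fixpoint difn (m : nat) (q : nat -> rat) (j : nat) : rat :=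
  if m is m'.+1 then difn m' q j.+1 - difn m' q j else q j.

Lemma difn_ext m q1 q2 : (forall j, q1 j = q2 j) -> forall j, difn m q1 j = difn m q2 j.
Proof. move=> h; elim: m => [|m IH] j /=; by rewrite ?h ?IH. Qed.

Lemma difn_sum m K (c : nat -> rat) (f : nat -> nat -> rat) j :
  difn m (fun x => \sum_(k < K) c k * f k x) j = \sum_(k < K) c k * difn m (f k) j.
Proof.
elim: m j => [|m IH] j //=. rewrite !IH -sumrB; apply: eq_bigr => k _; by rewrite mulrBr.
Qed.

Lemma difn_shift m q j : difn m (fun x => q x.+1) j = difn m q j.+1.
Proof. elim: m j => //= m IH j; by rewrite !IH. Qed.

Lemma difnS m q j : difn m.+1 q j = difn m (fun x => q x.+1 - q x) j.
Proof.
elim: m j => [|m IH] j; first by [].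
rewrite (_ : difn m.+2 q j = difn m.+1 q j.+1 - difn m.+1 q j) // !IH //.
Qed.

Lemma difn_up N q : (forall j, difn N q j = 0) -> forall M, (N <= M)%N -> forall j, difn M q j = 0.
Proof.
move=> h; elim=> [|M IH] hM j.
  by move: hM; rewrite leqn0 => /eqP <-.
case: (ltnP N M.+1) => hNM.
  by rewrite /= !IH ?subrr.
by have -> : M.+1 = N by apply/eqP; rewrite eqn_leq hM hNM.
Qed.

Lemma difn_pow (a b : rat) k M j : (k < M)%N ->
  difn M (fun x => (a * x%:R + b) ^+ k) j = 0.
Proof.
elim/ltn_ind: k M j => k IH [|M] j // hk.
rewrite difnS.
rewrite (@difn_ext _ _ (fun x => \sum_(i < k) (a ^+ (k - i) *+ 'C(k, i)) * (a * x%:R + b) ^+ i)).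
  rewrite (difn_sum _ _ (fun i => a ^+ (k - i) *+ 'C(k, i)) (fun i x => (a * x%:R + b) ^+ i)) big1 // => i _.
  rewrite IH ?mulr0 //; by case: i => i /= /leq_trans; apply.
move=> x.
have -> : a * x.+1%:R + b = a + (a * x%:R + b) by rewrite -addn1 natrD; ring.
rewrite exprDn big_ord_recr /= subnn expr0 mul1r binn mulr1n addrK.
by apply: eq_bigr => i _; rewrite mulrnAl.
Qed.

Definition A N q := \sum_(m < N.+1) (-1)^+m * difn m q 0 / 2^+m.+1.

Lemma A_shift N q : (forall j, difn N.+1 q j = 0) -> A N q + A N (fun x => q x.+1) = q 0.
Proof.
move=> h.
rewrite /A -big_split /=.
pose t := fun m => (-1)^+m * difn m q 0 / 2^+m.
transitivity (\sum_(m < N.+1) (t m - t m.+1)).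
  apply: eq_bigr => m _. rewrite difn_shift /t /=.
  have h2 : (2:rat)^+m != 0 by rewrite expf_neq0.
  rewrite !exprS. field. by rewrite h2.
rewrite -(big_mkord xpredT (fun m => t m - t m.+1)).
have -> : \sum_(0 <= i < N.+1) (t i - t i.+1) = - \sum_(0 <= i < N.+1) (t i.+1 - t i).
  by rewrite -sumrN; apply: eq_bigr => i _; rewrite opprB.
rewrite telescope_sumr // /t h mulr0 mul0r expr0 mul1r divr1 /=. by rewrite sub0r opprK.
Qed.

Lemma A_sum N K (c : nat -> rat) (f : nat -> nat -> rat) :
  A N (fun x => \sum_(k < K) c k * f k x) = \sum_(k < K) c k * A N (f k).
Proof.
rewrite /A.
under eq_bigr => m _ do rewrite difn_sum mulr_sumr mulr_suml.
rewrite exchange_big /=; apply: eq_bigr => k _.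
rewrite mulr_sumr; apply: eq_bigr => m _; ring.
Qed.

Lemma A_ext N q1 q2 : (forall j, q1 j = q2 j) -> A N q1 = A N q2.
Proof. move=> h; rewrite /A; apply: eq_bigr => m _; by rewrite (@difn_ext _ _ _ h). Qed.

Definition e N n := 2 * A N (fun x => (2 * x%:R + 1) ^+ n).

Lemma e_rec N n : (n <= N)%N ->
  \sum_(k < n.+1) 'C(n, k)%:R * (1 + (-1) ^+ k) * e N (n - k) = 2 * (n == 0%N)%:R.
Proof.
move=> hn.
have hq := @A_shift N (fun x => (2 * x%:R + 0) ^+ n) (fun j => @difn_pow 2 0 n N.+1 j hn).
rewrite (@A_ext _ _ (fun x => \sum_(k < n.+1) ((-1) ^+ k *+ 'C(n, k)) * (2 * x%:R + 1) ^+ (n - k))) in hq; last first.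
  move=> x; rewrite (_ : 2 * x%:R + 0 = (2 * x%:R + 1) + (-1)); last by rewrite addr0 addrK.
  rewrite exprDn; apply: eq_bigr => k _; by rewrite [RHS]mulrnAl [in LHS]mulrC.
rewrite (@A_ext _ (fun x => (2 * x.+1%:R + 0) ^+ n) (fun x => \sum_(k < n.+1) (1 *+ 'C(n, k)) * (2 * x%:R + 1) ^+ (n - k))) in hq; last first.
  move=> x; rewrite (_ : 2 * x.+1%:R + 0 = (2 * x%:R + 1) + 1); last by rewrite -addn1 natrD; ring.
  rewrite exprDn; apply: eq_bigr => k _; by rewrite expr1n mulr1 [RHS]mulrnAl mul1r.
rewrite (A_sum N n.+1 (fun k => (-1) ^+ k *+ 'C(n, k)) (fun k x => (2 * x%:R + 1) ^+ (n - k))) in hq.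
rewrite (A_sum N n.+1 (fun k => 1 *+ 'C(n, k)) (fun k x => (2 * x%:R + 1) ^+ (n - k))) in hq.
rewrite mulr0 addr0 expr0n /= in hq.
rewrite -hq mulrDr !mulr_sumr -big_split /=; apply: eq_bigr => k _.
rewrite /e -(mulr_natl ((-1) ^+ k) 'C(n, k)); set a := A N _; ring.
Qed.
Lemma difn_formula m q j :
  difn m q j = (-1) ^+ m * \sum_(i < m.+1) (-1) ^+ i * 'C(m, i)%:R * q (j + i)%N.
Proof.
elim: m j => [|m IH] j.
  by rewrite big_ord_recl big_ord0 /= !expr0 !mul1r addr0 addn0.
rewrite [LHS]/= !IH.
set F1 := \sum_(i < m.+1) _.
set F2 := \sum_(i < m.+1) _.
pose G := \sum_(i < m.+1) (-1) ^+ i.+1 * 'C(m, i.+1)%:R * q (j + i.+1)%N.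
pose H := \sum_(i < m.+1) (-1) ^+ i.+1 * 'C(m, i)%:R * q (j + i.+1)%N.
have ha : \sum_(i < m.+2) (-1) ^+ i * 'C(m.+1, i)%:R * q (j + i)%N = q j + (G + H).
  rewrite big_ord_recl /= expr0 bin0 mul1r addn0 mul1r; congr (_ + _).
  rewrite /G /H -big_split /=; apply: eq_bigr => i _.
  by rewrite /bump add1n binS natrD mulrDr mulrDl.
have hb : F2 = q j + G.
  rewrite /F2 /G big_ord_recl /= expr0 bin0 mul1r addn0 mul1r; congr (_ + _).
  rewrite [RHS]big_ord_recr /= bin_small // mulr0 mul0r addr0.
  by apply: eq_bigr => i _; rewrite /bump add1n.
have hc : H = - F1.
  rewrite /H /F1 -sumrN; apply: eq_bigr => i _.
  by rewrite exprS addnS addSn; ring.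
rewrite ha hb hc exprS; ring.
Qed.
Lemma binT N i : (i <= N)%N ->
  (\sum_(m < N.+1) 2 ^ (N - m) * 'C(m, i) = \sum_(l < (N - i).+1) 'C(N.+1, l))%N.
Proof.
Local Open Scope nat_scope.
elim: N i => [|N IH] i hi.
  by move: hi; rewrite leqn0 => /eqP ->; rewrite !big_ord_recl !big_ord0.
case: (ltnP i N.+1) => hiN; last first.
  have -> : i = N.+1 by apply/eqP; rewrite eqn_leq hi hiN.
  rewrite subnn big_ord_recr /= big1 ?big_ord_recl ?big_ord0 /= ?subnn ?binn //.
  move=> m _; by rewrite bin_small ?muln0.
have hi' : (i <= N)%N by [].
rewrite big_ord_recr /= subnn expn0 mul1n.
have -> : \sum_(m < N.+1) 2 ^ (N.+1 - m) * 'C(m, i) = 2 * \sum_(m < N.+1) 2 ^ (N - m) * 'C(m, i).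
  rewrite big_distrr /=; apply: eq_bigr => m _.
  by rewrite subSn ?expnS ?mulnA // -ltnS.
rewrite IH // subSn // [RHS]big_ord_recl bin0.
rewrite [in RHS](eq_bigr (fun l : 'I_(N-i).+1 => 'C(N.+1, l.+1) + 'C(N.+1, l))%N); last first.
  by move=> l _; rewrite /= /bump add1n binS.
rewrite big_split /=.
have h1 : (\sum_(l < (N - i).+2) 'C(N.+1, l) = 1 + \sum_(l < (N - i).+1) 'C(N.+1, l.+1))%N.
  by rewrite big_ord_recl bin0.
have h2 : (\sum_(l < (N - i).+2) 'C(N.+1, l) = \sum_(l < (N - i).+1) 'C(N.+1, l) + 'C(N.+1, (N - i).+1))%N.
  by rewrite big_ord_recr.
have : ('C(N.+1, (N - i).+1) = 'C(N.+1, i))%N.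
  by rewrite -subSn // bin_sub.
have : (0 < 'C(N.+1, (N - i).+1))%N by rewrite bin_gt0 -subSn // leq_subr.
set S := \sum_(l < (N - i).+1) 'C(N.+1, l).
set T := \sum_(l < (N - i).+1) 'C(N.+1, l.+1).
set U := \sum_(l < (N - i).+2) 'C(N.+1, l).
lia.
Qed.

Local Open Scope ring_scope.
Lemma W_A N (q : nat -> rat) :
  \sum_(j < N.+1) (-1) ^+ j * q j * ((\sum_(l < (N - j).+1) 'C(N.+1, l))%N)%:R
  = 2 ^+ N * (2 * A N q).
Proof.
rewrite /A !mulr_sumr.
transitivity (\sum_(m < N.+1) \sum_(i < N.+1) ((2 ^ (N - m) * 'C(m, i))%N%:R * ((-1) ^+ i * q i))).
  rewrite exchange_big /=; apply: eq_bigr => j _.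
  rewrite -(@binT N j); last by rewrite -ltnS.
  rewrite natr_sum mulr_sumr; apply: eq_bigr => m _.
  by rewrite mulrC.
apply: eq_bigr => m _.
have hm : (m <= N)%N by rewrite -ltnS.
rewrite difn_formula.
rewrite (big_ord_widen (N.+1) (fun i => (-1) ^+ i * 'C(m, i)%:R * q (0 + i)%N)) // big_mkcond /=.
have hc : forall x : rat, 2 ^+ N * (2 * ((-1) ^+ m * ((-1) ^+ m * x) / 2 ^+ m.+1)) = 2 ^+ (N - m) * x.
  move=> x; have h2 : (2:rat) ^+ m != 0 by rewrite expf_neq0.
  have hs : (-1) ^+ m * (-1) ^+ m = 1 :> rat by rewrite -exprMn mulrNN mulr1 expr1n.
  rewrite -{1}(subnK hm) exprD (mulrA ((-1) ^+ m)) hs mul1r exprS.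
  field; by rewrite h2.
rewrite hc mulr_sumr [RHS]big_mkcond /=; apply: eq_bigr => i _.
case: ltnP => hi.
  by rewrite natrM natrX add0n; ring.
by rewrite bin_small // muln0 mul0r.
Qed.
Lemma E_rec E (hE : euler_numbers E) n :
  \sum_(k < n.+1) 'C(n, k)%:R * (1 + (-1) ^+ k) * ((E (n - k)%N)%:~R : rat) = 2 * (n == 0%N)%:R.
Proof.
have h := hE n; rewrite big_mkord in h.
have -> : (n == 0%N)%:R = (n == 0%N)%:R * (n`!)%:R :> rat by case: n {h} => [|n] /=; rewrite ?mulr1 ?mul0r.
rewrite -h mulr_suml mulr_sumr; apply: eq_bigr => k _.
have hk : (k <= n)%N by rewrite -ltnS.
have f1 : ((k`!)%:R : rat) != 0 by rewrite pnatr_eq0 -lt0n fact_gt0.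
have f2 : (((n - k)`!)%:R : rat) != 0 by rewrite pnatr_eq0 -lt0n fact_gt0.
rewrite /cosh_coef -signr_odd; case: (odd k) => /=.
  by rewrite expr1 subrr mulr0 !mul0r mulr0.
rewrite expr0 -(bin_fact hk) !natrM; field; by rewrite f1 f2.
Qed.

Lemma rec_uniq N (x y : nat -> rat) :
  (forall n, (n <= N)%N -> \sum_(k < n.+1) 'C(n, k)%:R * (1 + (-1) ^+ k) * x (n - k)%N = 2 * (n == 0%N)%:R) ->
  (forall n, (n <= N)%N -> \sum_(k < n.+1) 'C(n, k)%:R * (1 + (-1) ^+ k) * y (n - k)%N = 2 * (n == 0%N)%:R) ->
  forall n, (n <= N)%N -> x n = y n.
Proof.
move=> hx hy; elim/ltn_ind=> n IH hn.
have := hx n hn; rewrite -(hy n hn) !big_ord_recl /= bin0 subn0 => h.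
have e : \sum_(i < n) 'C(n, bump 0 i)%:R * (1 + (-1) ^+ bump 0 i) * x (n - bump 0 i)%N
       = \sum_(i < n) 'C(n, bump 0 i)%:R * (1 + (-1) ^+ bump 0 i) * y (n - bump 0 i)%N.
  apply: eq_bigr => i _; have hi := ltn_ord i.
  rewrite /bump add1n IH //; lia.
rewrite e in h; move/addIr: h.
rewrite expr0 !mul1r => h.
have h2 : (1 + 1 : rat) != 0 by [].
exact: (mulfI h2).
Qed.

Lemma rec_odd N (x : nat -> rat) :
  (forall n, (n <= N)%N -> \sum_(k < n.+1) 'C(n, k)%:R * (1 + (-1) ^+ k) * x (n - k)%N = 2 * (n == 0%N)%:R) ->
  forall n, (n <= N)%N -> odd n -> x n = 0.
Proof.
move=> hx; elim/ltn_ind=> n IH hn hodd.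
have := hx n hn; rewrite big_ord_recl /= bin0 subn0.
have -> : (n == 0%N) = false by case: n {IH hn} hodd.
rewrite big1 ?addr0 ?mulr0.
  rewrite expr0 !mul1r => h.
  have h2 : (1 + 1 : rat) != 0 by [].
  by apply: (mulfI h2); rewrite h mulr0.
move=> i _; have hi := ltn_ord i.
rewrite /bump add1n.
case ho : (odd i.+1).
  by rewrite -signr_odd ho expr1 subrr mulr0 mul0r.
rewrite IH ?mulr0 //; try lia.
Qed.
Lemma sgn_aux (k j n : nat) : (k + j <= n)%N ->
  ((-1) ^+ k * (-1) ^+ (n - k - j) : int) = (-1) ^+ n * (-1) ^+ j.
Proof.
move=> h; set d := (n - k - j)%N.
have -> : n = (k + d + j)%N by rewrite /d; lia.
have sq : ((-1) ^+ j * (-1) ^+ j : int) = 1 by rewrite -exprMn mulrNN mulr1 expr1n.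
by rewrite exprD -mulrA sq mulr1 exprD.
Qed.

Lemma LHS_eq n :
  \sum_(0 <= k < n.+1) (-1) ^+ k * Bnk n k =
  (-1) ^+ n * \sum_(j < n.+1) (-1) ^+ j * (((2 * j).+1 ^ n)%N)%:R
     * ((\sum_(l < (n - j).+1) 'C(n.+1, l))%N)%:R.
Proof.
rewrite big_mkord.
transitivity (\sum_(k < n.+1) \sum_(j < n.+1)
   (if (j < (n - k).+1)%N then (-1) ^+ n * (-1) ^+ j * ('C(n.+1, (n - k - j)%N))%:R * (((2 * j).+1 ^ n)%N)%:R else (0:int))).
  apply: eq_bigr => k _; rewrite /Bnk big_mkord mulr_sumr.
  rewrite (big_ord_widen (n.+1) (fun j => (-1) ^+ k * ((-1) ^+ (n - k - j) * ('C(n.+1, (n - k - j)%N))%:R * (((2 * j).+1 ^ n)%N)%:R))); last first.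
    by rewrite ltnS leq_subr.
  rewrite big_mkcond; apply: eq_bigr => j _.
  case hj : (j < (n - k).+1)%N => //.
  have hk := ltn_ord k.
  rewrite !mulrA sgn_aux //; lia.
rewrite exchange_big mulr_sumr; apply: eq_bigr => j _ /=.
have hj := ltn_ord j.
rewrite (eq_bigr (fun k : 'I_n.+1 => if (k < (n - j).+1)%N then (-1) ^+ n * (-1) ^+ j * (((2 * j).+1 ^ n)%N)%:R * ('C(n.+1, (n - k - j)%N))%:R else (0:int))); last first.
  move=> k _.
  have hk := ltn_ord k.
  have -> : (j < (n - k).+1)%N = (k < (n - j).+1)%N by apply/idP/idP; lia.
  by case: (k < (n - j).+1)%N => //; ring.
rewrite -big_mkcond /= -(big_ord_widen (n.+1) (fun k => (-1) ^+ n * (-1) ^+ j * (((2 * j).+1 ^ n)%N)%:R * ('C(n.+1, (n - k - j)%N))%:R)); last by rewrite ltnS leq_subr.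
rewrite -mulr_sumr natr_sum !mulrA; congr (_ * _).
rewrite (reindex_inj rev_ord_inj) /=; apply: eq_bigr => l _.
have hl := ltn_ord l.
congr (_%:R); congr 'C(_, _); lia.
Qed.

Theorem corollary6p2 (E : nat -> int) (hE : euler_numbers E) (n : nat) :
  \sum_(0 <= k < n.+1) (-1) ^+ k * Bnk n k = (2 ^ n)%:R * E n.
Proof.
rewrite LHS_eq; apply: (@intr_inj rat).
rewrite !rmorphM /= rmorphXn /= rmorphN1 rmorph_sum /=.
rewrite (eq_bigr (fun j : 'I_n.+1 => (-1) ^+ j * (fun x : nat => (2 * x%:R + 1 : rat) ^+ n) j
      * ((\sum_(l < (n - j).+1) 'C(n.+1, l))%N)%:R)); last first.
  move=> j _; rewrite !rmorphM /= rmorphXn /= rmorphN1 !rmorph_nat.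
  rewrite natrX; congr (_ * _ * _); congr (_ ^+ _); by rewrite -addn1 natrD natrM.
rewrite (W_A n (fun x : nat => (2 * x%:R + 1 : rat) ^+ n)).
have ee : forall m, (m <= n)%N -> e n m = (E m)%:~R.
  apply: rec_uniq; first by move=> m hm; apply: e_rec.
  by move=> m _; apply: E_rec.
rewrite -/(e n n) ee // rmorph_nat natrX.
case ho : (odd n).
  have := @rec_odd n (fun m => (E m)%:~R) (fun m _ => @E_rec E hE m) n (leqnn n) ho.
  by move=> /= ->; rewrite !mulr0.
by rewrite -signr_odd ho expr0 mul1r.
Qed.
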